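(* Let $B$ be an abelian group and $f\colon\mathbb{Z}^2\to B$ a function satisfying, for all $k,l\in\mathbb{Z}$, $$f(k+1,l)+f(k,l+1)+f(k-1,l-1)=f(k-1,l)+f(k,l-1)+f(k+1,l+1).$$ Then there exist functions $\kappa,\lambda,\mu\colon\mathbb{Z}\to B$ such that $f(k,l)=\kappa(k)+\lambda(l)+\mu(k-l)$ for all $k,l\in\mathbb{Z}$. *)

(* Defs.v *)
From mathcomp Require Import all_boot all_order all_algebra.
Set Implicit Arguments. Unset Strict Implicit. Unset Printing Implicit Defensive.

(* Main.v *)
Require Import Defs.
From mathcomp Require Import all_boot all_order all_algebra.
From mathcomp Require Import zify.
Import GRing.Theory.
Local Open Scope ring_scope.

Lemma int_ind2 (P : int -> Prop) : P 0 -> (forall z, P z -> P (z+1)) ->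
  (forall z, P z -> P (z-1)) -> forall z, P z.
Proof.
move=> P0 Hs Hp; case=> n.
  elim: n => // n IH. by rewrite -addn1 PoszD; apply: Hs.
elim: n => [|n IH]; first by have := Hp 0 P0; rewrite sub0r.
have -> : Negz n.+1 = Negz n - 1 by rewrite !NegzE -addn1 PoszD opprD.
exact: Hp.
Qed.

Lemma prim_ex (B : zmodType) (D : int -> B) :
  exists P : int -> B, forall z, P (z+1) = P z + D (z+1).
Proof.
exists (fun z => match z with
  | Posz n => \sum_(i < n) D (i.+1)%:Z
  | Negz n => - \sum_(i < n.+1) D (- (i%:Z)) end).
case=> n.
  rewrite -[Posz n + 1]PoszD addn1 big_ord_recr /=. by [].

case: n => [|n] /=.
  by rewrite /= big_ord0 big_ord1 addNr.

have -> : Negz n.+1 + 1 = Negz n by rewrite !NegzE -addn1 PoszD opprD addrNK.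
rewrite [in RHS]big_ord_recr /= subn1 /= NegzE opprD addrNK.
by [].
Qed.

Lemma subrACA' (B : zmodType) (x y z w : B) : (x - y) - (z - w) = (x - z) - (y - w).
Proof. by rewrite !opprB addrACA [in RHS]addrACA [- y + _]addrC. Qed.
Lemma addrK' (B : zmodType) (x y : B) : (x + y) - x = y.
Proof. by rewrite addrC addKr. Qed.
Lemma L1 (B : zmodType) (a b c d e F m : B) : a + b + c = d + e + F ->
  (F - a) - (b - m) = (m - e) - (d - c).
Proof.
move=> H.
have -> : F = a + b + c - (d + e) by rewrite H [d + e + F]addrC addrK.
rewrite -[a + b + c]addrA [a + (b + c) - (d + e) - a]addrAC addrK' !opprB opprD.
rewrite addrC !addrA (addrAC _ m) (addrAC _ c) addrK [RHS]addrC -!addrA; congr (_ + _).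
by rewrite [LHS]addrA [LHS]addrC.
Qed.
Lemma L2 (B : zmodType) (f11 f10 f01 f00 cm A1 B1 A0 B0 : B) :
  (f11 - f10) - (f01 - f00) = (B1 - A1) - (B0 - A0) ->
  (f11 - (cm + (A0 - B0))) - (f01 - cm) =
  (f10 - (cm + (A0 - B0) + (A1 - B1))) - (f00 - (cm + (A0 - B0))).
Proof.
move=> H.
rewrite (@subrACA' _ f11) (@subrACA' _ f10) [cm + _ + _ - _]addrK' [cm + _ - cm]addrK'.
rewrite (@subrACA' _ f11) -(opprB A1) -(opprB A0) opprK in H.
move: H; move: (f11 - f01) (f10 - f00) (A0 - B0) (A1 - B1) => P Q X0 X1.
move=> /eqP; rewrite subr_eq => /eqP ->.
by rewrite addrAC addrK addrC.
Qed.

Theorem proposition8p3 (B : zmodType) (f : int -> int -> B)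
  (hf : forall k l : int,
      f (k + 1) l + f k (l + 1) + f (k - 1) (l - 1)
      = f (k - 1) l + f k (l - 1) + f (k + 1) (l + 1)) :
  exists (kappa lambda mu : int -> B),
    forall k l : int, f k l = kappa k + lambda l + mu (k - l).
Proof.
pose g k l := (f (k+1) (l+1) - f (k+1) l) - (f k (l+1) - f k l).
have gs : forall k l, g (k+1) (l+1) = g k l.
  move=> k l; have := hf (k+1) (l+1); rewrite !addrK /g; exact: L1.
have gd : forall l k, g k l = g (k - l) 0.
  elim/int_ind2 => [k|l IH k|l IH k]; first by rewrite subr0.
    by rewrite -{1}(subrK 1 k) gs IH opprD addrA addrAC.
  by rewrite -gs subrK IH opprB addrA.
have [c Hc] := @prim_ex _ (fun m => f m 0 - f m 1).
pose h k l := f k l - c (k - l).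
have E : forall k l, h (k+1) (l+1) - h k (l+1) = h (k+1) l - h k l.
  move=> k l; rewrite /h.
  have [m em] : exists m, k - l = m + 1 by exists (k - l - 1); lia.
  have e1 : k + 1 - (l + 1) = m + 1 by lia.
  have e2 : k - (l + 1) = m by lia.
  have e3 : k + 1 - l = m + 1 + 1 by lia.
  rewrite e1 e2 e3 em !Hc /=.
  apply: L2.
  have := gd l k; rewrite /g em add0r.
  exact.
have D : forall l k, h (k+1) l - h k l = h (k+1) 0 - h k 0.
  elim/int_ind2 => [k|l IH k|l IH k]; first by [].
    by rewrite E IH.
  by rewrite -IH -(E k (l-1)) subrK.
have R : forall k l, h k l - h 0 l = h k 0 - h 0 0.
  elim/int_ind2 => [l|k IH l|k IH l]; first by rewrite !subrr.
    by rewrite -(subrK (h k l) (h (k+1) l)) -addrA IH D addrA subrK.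
  have key : forall x y z : B, y - z = (x - z) - (x - y).
    by move=> x y z; rewrite opprB [RHS]addrC addrA subrK.
  rewrite (key (h k l)) (key (h k 0) (h (k-1) 0)) IH.
  by have := D l (k-1); rewrite (subrK 1 k) => ->.
exists (fun k => h k 0), (fun l => h 0 l - h 0 0), c => k l.
have Hk : h k l = h k 0 + (h 0 l - h 0 0) by rewrite addrCA -(R k l) addrC subrK.
by rewrite -Hk /h subrK.
Qed.
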